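(* For every positive integer $n$, there is a temporal graph $G$ on $n$ vertices and a vertex $s$ of $G$ such that every single-source temporal preserver of $G$ with respect to $s$ has size $\Theta(n^2)$.
   Context: A temporal graph is an undirected graph $G=(V,E)$ with a labeling $\lambda:E\to\mathbb{N}^+$. A temporal path is a path whose traversed edges have non-decreasing labels in the order of traversal; its length is its number of edges, and $d_G(u,v)$ is the minimum length of a temporal path from $u$ to $v$ in $G$ ($+\infty$ if none). A single-source temporal preserver of $G$ w.r.t. $s$ is a subgraph $H$ with $V(H)=V$, $E(H)\subseteq E$ (same labels), such that $d_H(s,v)= d_G(s,v)$ for every $v\in V$. Its size is its number of edges. *)

(* Defs.v *)
From mathcomp Require Import all_boot.
Set Implicit Arguments. Unset Strict Implicit. Unset Printing Implicit Defensive.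

Record tgraph (n : nat) := TGraph {
  tedges : {set {set 'I_n}};
  tlab   : {set 'I_n} -> nat }.

Definition tgraph_wf n (G : tgraph n) : Prop :=
  forall e, e \in tedges G -> #|e| = 2 /\ 0 < tlab G e.

Definition tsubgraph n (H G : tgraph n) : Prop :=
  tedges H \subset tedges G /\
  forall e, e \in tedges H -> tlab H e = tlab G e.

Definition is_tpath n (G : tgraph n) (u : 'I_n) (p : seq 'I_n) : bool :=
  [&& uniq (u :: p),
      all (fun xy => [set xy.1; xy.2] \in tedges G) (zip (u :: p) p)
    & sorted leq (pairmap (fun x y => tlab G [set x; y]) u p)].

Definition treach n (G : tgraph n) (u v : 'I_n) (k : nat) : bool :=
  [exists p : k.-tuple 'I_n, is_tpath G u p && (last u p == v)].

(* Since paths have distinct vertices,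
   their length is < n, so searching lengths 0 .. n-1 suffices. *)
Definition tdist n (G : tgraph n) (u v : 'I_n) : option nat :=
  let k := find (treach G u v) (iota 0 n) in
  if k < n then Some k else None.

Definition tpreserver n (G H : tgraph n) (s : 'I_n) : Prop :=
  tsubgraph H G /\ forall v, tdist H s v = tdist G s v.

Definition tgsize n (H : tgraph n) : nat := #|tedges H|.

(* Main.v *)
Require Import Defs.
From mathcomp Require Import all_boot zify.
Set Implicit Arguments. Unset Strict Implicit. Unset Printing Implicit Defensive.

Definition Lj m j := 2 * (m - j).
Definition pv m j r :=
  if r == 0 then 0 else if r == Lj m j then (4*m + j).+1
  else if r %% 2 == 1 then (j + r %/ 2).+1 else m + 3*j + r %/ 2.

Ltac pvcases := rewrite /pv /Lj; repeat case: ifP => ? ; try lia.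

Lemma pv0 m j : pv m j 0 = 0. Proof. by []. Qed.

Lemma pv_nz m j r : j < m -> 0 < r -> r <= Lj m j -> pv m j r != 0.
Proof. move=> h1 h2 h3; apply/eqP; move: h1 h2 h3; pvcases. Qed.

Lemma pv_inj m j r r' : j < m -> r <= Lj m j -> r' <= Lj m j ->
  pv m j r = pv m j r' -> r = r'.
Proof. move=> h1 h2 h3; rewrite /pv; move: h1 h2 h3; rewrite /Lj.
repeat case: ifP => ?; lia. Qed.

Lemma pv_lt m j r : j < m -> r <= Lj m j -> pv m j r < 5 * m + 1.
Proof. move=> h1 h2; move: h1 h2; pvcases. Qed.

Lemma pv_earlier m j j' p p' : j < j' -> j' < m -> 0 < p -> p <= Lj m j ->
  p' <= Lj m j' -> pv m j p = pv m j' p' -> p' < p.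
Proof. move=> h1 h2 h3 h4 h5; move: h1 h2 h3 h4 h5; rewrite /pv /Lj.
repeat case: ifP => ?; lia. Qed.

Lemma pv_target m j j' p' : j < m -> j' < m -> p' <= Lj m j' ->
  pv m j (Lj m j) = pv m j' p' -> j = j'.
Proof. move=> h1 h2 h3; move: h1 h2 h3; rewrite /pv /Lj.
repeat case: ifP => ?; lia. Qed.

Definition pmatch m j r u v :=
  [&& j < m, r < Lj m j &
   ((pv m j r == u) && (pv m j r.+1 == v)) || ((pv m j r == v) && (pv m j r.+1 == u))].

Lemma pmatch_uniq m j r j' r' u v : pmatch m j r u v -> pmatch m j' r' u v ->
  j = j' /\ r = r'.
Proof.
rewrite /pmatch => /and3P [h1 h2 /orP h3] /and3P [h1' h2' /orP h3'].
move: h1 h2 h1' h2'.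
case: h3 => /andP [/eqP e1 /eqP e2]; case: h3' => /andP [/eqP e1' /eqP e2'];
 rewrite -e1' in e1 e2; rewrite -e2' in e1 e2 || rewrite -e1 in e2;
 move: e1 e2 {e1' e2'}; rewrite /pv /Lj; repeat case: ifP => ?; lia.
Qed.

Definition W m := (2 * m).+1.
Definition glab m u v := \max_(j < m) \max_(r < 2 * m)
   (if pmatch m j r u v then W m * j + r + 1 else 0).

Lemma pmatch_sym m j r u v : pmatch m j r u v = pmatch m j r v u.
Proof. by rewrite /pmatch orbC. Qed.

Lemma glab_sym m u v : glab m u v = glab m v u.
Proof. by apply: eq_bigr => j _; apply: eq_bigr => r _; rewrite pmatch_sym. Qed.

Lemma pmatch_bounds m j r u v : pmatch m j r u v -> j < m /\ r < Lj m j.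
Proof. by case/and3P. Qed.

Lemma pmatch_ends m j r u v : pmatch m j r u v ->
  (pv m j r = u /\ pv m j r.+1 = v) \/ (pv m j r = v /\ pv m j r.+1 = u).
Proof. by case/and3P => _ _ /orP [/andP [/eqP -> /eqP ->] | /andP [/eqP -> /eqP ->]]; [left|right]. Qed.

Lemma pmatch_neq m j r u v : pmatch m j r u v -> u != v.
Proof.
move=> h; have [hj hr] := pmatch_bounds h.
have hne : pv m j r != pv m j r.+1.
  by apply/eqP => /(pv_inj hj (ltnW hr) hr); lia.
by case: (pmatch_ends h) => [[<- <-]|[<- <-]] //; rewrite eq_sym.
Qed.

Lemma glab_match m j r u v : pmatch m j r u v -> glab m u v = W m * j + r + 1.
Proof.
move=> h; have [hj hr] := pmatch_bounds h.
apply/eqP; rewrite eqn_leq; apply/andP; split.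
  apply/bigmax_leqP => j' _; apply/bigmax_leqP => r' _.
  case: ifP => // h'; have [-> ->] := pmatch_uniq h' h; by [].
have hr2 : r < 2 * m by move: hr; rewrite /Lj; lia.
apply: (leq_trans _ (leq_bigmax (Ordinal hj))) => /=.
apply: (leq_trans _ (leq_bigmax (Ordinal hr2))) => /=.
by rewrite h.
Qed.

Lemma glab_pos m u v : 0 < glab m u v -> exists j r, pmatch m j r u v.
Proof.
move=> h; case: (boolP [exists j : 'I_m, [exists r : 'I_(2*m), pmatch m j r u v]]).
  by case/existsP => j /existsP [r hr]; exists j, r.
rewrite negb_exists => /forallP hn; move: h.
suff -> : glab m u v = 0 by [].
apply/eqP; rewrite -leqn0; apply/bigmax_leqP => j _; apply/bigmax_leqP => r _.
by move: (hn j); rewrite negb_exists => /forallP /(_ r) /negbTE ->.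
Qed.

Lemma pmatch_pos m j r u v : pmatch m j r u v ->
  exists p, ((p == r) || (p == r.+1)) /\ pv m j p = v /\ pv m j (2 * r + 1 - p) = u.
Proof.
case/pmatch_ends => [[e1 e2]|[e1 e2]].
  by exists r.+1; rewrite eqxx orbT; split => //; split => //; rewrite -e1; congr pv; lia.
by exists r; rewrite eqxx; split => //; split => //; rewrite -e2; congr pv; lia.
Qed.

Lemma lab_cmp m j r j' r' : r < W m -> r' < W m -> W m * j + r <= W m * j' + r' ->
  j <= j'.
Proof. rewrite /W => *; nia. Qed.

Lemma step m j r j' r' x y z : pmatch m j r x y -> pmatch m j' r' y z -> x != z ->
  W m * j + r <= W m * j' + r' -> r' <= r.+1 /\ (r' = r.+1 -> j' = j).
Proof.
move=> h1 h2 hxz hl.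
have [hj hr] := pmatch_bounds h1; have [hj' hr'] := pmatch_bounds h2.
have [p [hp [ey ex]]] := pmatch_pos h1.
rewrite pmatch_sym in h2.
have [p' [hp' [ey' ez]]] := pmatch_pos h2.
have hrW : r < W m by move: hr; rewrite /Lj /W; lia.
have hrW' : r' < W m by move: hr'; rewrite /Lj /W; lia.
have hjj : j <= j' := lab_cmp hrW hrW' hl.
case: (ltngtP j j') hjj => // [hlt _ | heq _].
  case: (boolP (y == 0)) => [/eqP y0 | yn0].
    have p0 : p = 0.
      case: (posnP p) => // hp0.
      have := pv_nz hj hp0 (_ : p <= Lj m j); rewrite ey y0 => /(_ ltac:(lia)); by [].
    have p'0 : p' = 0.
      case: (posnP p') => // hp0.
      have := pv_nz hj' hp0 (_ : p' <= Lj m j'); rewrite ey' y0 => /(_ ltac:(lia)); by [].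
    lia.
  have hpp : 0 < p.
    rewrite lt0n; apply/eqP => p0; move: yn0; by rewrite -ey p0 pv0.
  have := pv_earlier hlt hj' hpp (_ : p <= Lj m j) (_ : p' <= Lj m j') (etrans ey (esym ey')).
  move=> /(_ ltac:(lia) ltac:(lia)) => ?; lia.
subst j'.
have epp : p = p'.
  apply: (pv_inj hj) => //; try lia; by rewrite ey ey'.
have hrr : r <= r' by move: hl; lia.
case: (ltngtP r r') hrr => // [hlt _ | eqr _]; first lia.
subst r' p'; move: hxz; by rewrite -ex -ez eqxx.
Qed.

Lemma path_forced m j (w : nat -> nat) k :
  j < m -> w 0 = 0 ->
  (forall i, i < k -> 0 < glab m (w i) (w i.+1)) ->
  (forall i, i.+1 < k -> glab m (w i) (w i.+1) <= glab m (w i.+1) (w i.+2)) ->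
  (forall i, i.+1 < k -> w i != w i.+2) ->
  w k = pv m j (Lj m j) -> k <= Lj m j ->
  k = Lj m j /\ forall i, i < k -> pmatch m j i (w i) (w i.+1).
Proof.
move=> hj w0 hE hS hU wk hk.
have fwd : forall i, i < k -> forall j0 r0, pmatch m j0 r0 (w i) (w i.+1) -> r0 <= i.
  elim=> [|i IH] hi j0 r0 hm.
    have [hj0 hr0] := pmatch_bounds hm.
    rewrite w0 in hm; case: (pmatch_ends hm) => [[e1 e2]|[e1 e2]].
      case: (posnP r0) => [->|hp] //.
      by move: (pv_nz hj0 hp (ltnW hr0)); rewrite e1.
    by move: (pv_nz hj0 (ltn0Sn r0) hr0); rewrite e2.
  have [j1 [r1 hm1]] := glab_pos (hE i (ltnW hi)).
  have := IH (ltnW hi) _ _ hm1 => hr1.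
  have hl := hS i hi; rewrite (glab_match hm1) (glab_match hm) in hl.
  have [] := step hm1 hm (hU i hi) (_ : W m * j1 + r1 <= W m * j0 + r0); first by lia.
  lia.
have kpos : 0 < k.
  case: (posnP k) => // k0; move: wk; rewrite k0 w0 => /esym /eqP.
  by rewrite (negbTE (pv_nz hj _ (leqnn _))) //; rewrite /Lj; lia.
have [j1 [r1 hm1]] := glab_pos (hE k.-1 ltac:(lia)).
have ek : k.-1.+1 = k by lia.
rewrite ek wk in hm1.
have [hj1 hr1] := pmatch_bounds hm1.
have [ejj er1] : j1 = j /\ r1.+1 = Lj m j.
  case: (pmatch_ends hm1) => [[e1 e2]|[e1 e2]].
    have ej := pv_target hj hj1 hr1 (esym e2); subst j1; split => //.
    have := pv_inj hj (leqnn _) hr1 (esym e2); lia.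
  have ej := pv_target hj hj1 (ltnW hr1) (esym e1); subst j1; split => //.
  have := pv_inj hj (leqnn _) (ltnW hr1) (esym e1); lia.
subst j1.
have := fwd k.-1 ltac:(lia) _ _ (_ : pmatch m j r1 (w k.-1) (w k.-1.+1)).
rewrite ek wk => /(_ hm1) => hr1k.
have kL : k = Lj m j by lia.
split => //.
have bwd : forall d i, i < k -> k - i <= d.+1 -> pmatch m j i (w i) (w i.+1).
  elim=> [|d IH] i hi hd.
    have -> : i = k.-1 by lia.
    rewrite ek wk; have e : r1 = k.-1 by lia.
    by rewrite e in hm1.
  case: (leqP (k - i) d.+1) => hd'; first exact: IH.
  have hm2 := IH i.+1 ltac:(lia) ltac:(lia).
  have [j0 [r0 hm0]] := glab_pos (hE i hi).
  have hr0 := fwd i hi _ _ hm0.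
  have hbW : W m * j + i.+1 < W m * j.+1 by rewrite /W; move: hi; rewrite kL /Lj; nia.
  have hl := hS i ltac:(lia); rewrite (glab_match hm0) (glab_match hm2) in hl.
  have [h1 h2] := step hm0 hm2 (hU i ltac:(lia)) ltac:(lia).
  have er : r0 = i by lia.
  subst r0; by rewrite (h2 erefl).
move=> i hi; apply: (bwd k i hi); lia.
Qed.

Definition score n m (e : {set 'I_n}) := \max_(x in e) \max_(y in e) glab m x y.
Definition Gr n m : tgraph n :=
  TGraph [set e : {set 'I_n} | (#|e| == 2) && (0 < score m e)] (@score n m).

Lemma glab_diag m u : glab m u u = 0.
Proof.
case: (posnP (glab m u u)) => // /glab_pos [j [r h]].
by move: (pmatch_neq h); rewrite eqxx.
Qed.

Lemma score2 n m (x y : 'I_n) : x != y -> score m [set x; y] = glab m x y.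
Proof.
move=> hxy; rewrite /score big_setU1 ?inE //= big_set1.
rewrite big_setU1 ?inE //= big_set1 big_setU1 ?inE //= big_set1.
by rewrite !glab_diag (glab_sym m y x) max0n maxn0 maxnn.
Qed.

Lemma Gr_edge n m (x y : 'I_n) :
  ([set x; y] \in tedges (Gr n m)) = (x != y) && (0 < glab m x y).
Proof.
rewrite inE cards2; case: (eqVneq x y) => [<-|h] //=.
by rewrite (score2 m h).
Qed.

Lemma Gr_lab n m (x y : 'I_n) : x != y -> tlab (Gr n m) [set x; y] = glab m x y.
Proof. exact: score2. Qed.

Lemma Gr_wf n m : tgraph_wf (Gr n m).
Proof. by move=> e; rewrite inE => /andP [/eqP -> h]. Qed.

Lemma pairmap_eq_in n (E : {set {set 'I_n}}) (f g : {set 'I_n} -> nat) u p :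
  all (fun xy => [set xy.1; xy.2] \in E) (zip (u :: p) p) ->
  (forall e, e \in E -> f e = g e) ->
  pairmap (fun x y => f [set x; y]) u p = pairmap (fun x y => g [set x; y]) u p.
Proof.
move=> + hfg; elim: p u => [|x p IH] u //=.
by case/andP => h1 h2; rewrite hfg // IH.
Qed.

Lemma tpath_sub n (H G : tgraph n) u p : tsubgraph H G -> is_tpath H u p -> is_tpath G u p.
Proof.
case=> hsub hlab /and3P [hu ha hs]; apply/and3P; split => //.
  apply: sub_all ha => xy; exact: (subsetP hsub).
by rewrite -(pairmap_eq_in ha hlab).
Qed.

Lemma all_zip_nth (T : Type) (a : pred (T * T)) u p : all a (zip (u :: p) p) ->
  forall d i, i < size p -> a (nth d (u :: p) i, nth d (u :: p) i.+1).
Proof.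
elim: p u => [|x p IH] u //= /andP [h1 h2] d [|i] hi //=.
exact: (IH x h2 d i).
Qed.

Lemma tpath_nth n (G : tgraph n) u p : is_tpath G u p ->
  [/\ forall i j, i <= size p -> j <= size p -> nth u (u :: p) i = nth u (u :: p) j -> i = j,
      forall i, i < size p -> [set nth u (u :: p) i; nth u (u :: p) i.+1] \in tedges G
    & forall i, i.+1 < size p -> tlab G [set nth u (u :: p) i; nth u (u :: p) i.+1]
                               <= tlab G [set nth u (u :: p) i.+1; nth u (u :: p) i.+2]].
Proof.
case/and3P => hu ha hs; split.
- move=> i j hi hj e; apply/eqP; rewrite -(nth_uniq u _ _ hu) ?e //=; lia.
- by move=> i hi; have := all_zip_nth ha u hi.
- move=> k hk; move/(sortedP 0): hs; rewrite size_pairmap => /(_ k hk).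
  rewrite !(nth_pairmap u) //; lia.
Qed.

Lemma tdist_treach n (G : tgraph n) u v k : tdist G u v = Some k -> treach G u v k.
Proof.
rewrite /tdist; case: ifP => // hk [<-].
have hh : has (treach G u v) (iota 0 n) by rewrite has_find size_iota.
by have := nth_find 0 hh; rewrite nth_iota ?add0n // -(size_iota 0 n) -has_find.
Qed.

Lemma treach_tdist n (G : tgraph n) u v k : treach G u v k -> k < n ->
  exists2 k', k' <= k & tdist G u v = Some k'.
Proof.
move=> hr hk; rewrite /tdist.
have hf : find (treach G u v) (iota 0 n) <= k.
  rewrite leqNgt; apply/negP => hlt.
  by move: (before_find 0 hlt); rewrite nth_iota ?add0n ?hr.
by exists (find (treach G u v) (iota 0 n)) => //; rewrite ifT //; lia.
Qed.

Lemma val_tov n (s : 'I_n) x : x < n -> val (insubd s x) = x.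
Proof. by move=> h; rewrite val_insubd h. Qed.

Lemma zip_nth_all (T : Type) (a : pred (T * T)) u p d :
  (forall i, i < size p -> a (nth d (u :: p) i, nth d (u :: p) i.+1)) ->
  all a (zip (u :: p) p).
Proof.
elim: p u => [|x p IH] u //= h; apply/andP; split; first exact: (h 0).
by apply: IH => i hi; apply: (h i.+1).
Qed.

Definition hseq n m j (s : 'I_n) : seq 'I_n :=
  map (fun i => insubd s (pv m j i)) (iota 1 (Lj m j)).

Lemma hseq_size n m j (s : 'I_n) : size (hseq m j s) = Lj m j.
Proof. by rewrite size_map size_iota. Qed.

Lemma hseq_nth n m j (s : 'I_n) i : val s = 0 -> j < m -> 5 * m + 1 <= n ->
  i <= Lj m j -> val (nth s (s :: hseq m j s) i) = pv m j i.
Proof.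
move=> s0 hj hn; case: i => [|i] hi /=; first by rewrite s0.
rewrite (nth_map 0) ?size_iota // nth_iota // val_tov // add1n.
have := pv_lt hj hi; lia.
Qed.

Lemma honest n m j (s : 'I_n) : val s = 0 -> j < m -> 5 * m + 1 <= n ->
  treach (Gr n m) s (insubd s (pv m j (Lj m j))) (Lj m j).
Proof.
move=> s0 hj hn; apply/existsP.
have hsz : size (hseq m j s) == Lj m j by rewrite hseq_size.
exists (Tuple hsz) => /=.
have hv := hseq_nth s0 hj hn.
have hsz' := hseq_size m j s.
have hv2 : forall i, i < Lj m j -> val (nth s (hseq m j s) i) = pv m j i.+1.
  by move=> i hi; apply: (hv i.+1).
apply/andP; split; last first.
  rewrite (last_nth s) hsz'; apply/eqP; apply: val_inj.
  rewrite hv // val_tov //; have := pv_lt hj (leqnn (Lj m j)); lia.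
apply/and3P; split.
- apply/(uniqP s) => i k; rewrite !inE /= hsz' => hi hk e.
  have := congr1 val e; rewrite ?hv2 ?hv; try lia.
  by apply: pv_inj; lia.
- apply: (zip_nth_all (d := s)) => i; rewrite hsz' => hi /=.
  rewrite Gr_edge; apply/andP; split.
    apply/eqP => e; have := congr1 val e; rewrite ?hv2 ?hv; try lia.
    move=> e'; have := @pv_inj m j i i.+1 hj ltac:(lia) ltac:(lia) e'; lia.
  rewrite ?hv2 ?hv; try lia.
  rewrite (@glab_match m j i) //; first lia.
  by rewrite /pmatch hj hi !eqxx.
- apply/(sortedP 0) => i; rewrite size_pairmap hsz' => hi.
  rewrite !(nth_pairmap s) ?hsz' //.
  have gl : forall k, k < Lj m j -> tlab (Gr n m) [set nth s (s :: hseq m j s) k;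
                                                     nth s (s :: hseq m j s) k.+1]
                                    = W m * j + k + 1.
    move=> k hk; rewrite Gr_lab.
      rewrite ?hv2 ?hv; try lia.
      by apply: glab_match; rewrite /pmatch hj hk !eqxx.
    apply/eqP => e; have := congr1 val e; rewrite ?hv2 ?hv; try lia.
    move=> e'; have := @pv_inj m j k k.+1 hj ltac:(lia) ltac:(lia) e'; lia.
  rewrite (gl i) ?(gl i.+1) //; try lia. exact: ltnW.
Qed.

Lemma set2C' (T : finType) (x y : T) : [set x; y] = [set y; x].
Proof. by apply/setP => z; rewrite !inE orbC. Qed.

Lemma forced_edge n m j i (s : 'I_n) (H : tgraph n) : val s = 0 -> j < m -> 5 * m + 1 <= n ->
  tpreserver (Gr n m) H s -> i < Lj m j ->
  [set insubd s (pv m j i); insubd s (pv m j i.+1)] \in tedges H.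
Proof.
move=> s0 hj hn [hsub hdist] hi.
have hLn : Lj m j < n by rewrite /Lj; lia.
have [k' hk' hd] := treach_tdist (honest s0 hj hn) hLn.
rewrite -hdist in hd; have /existsP [p /andP [hp /eqP hl]] := tdist_treach hd.
have hpG := tpath_sub hsub hp.
have [hinj hedge hsort] := tpath_nth hpG.
have [_ hedgeH _] := tpath_nth hp.
have hsp : size p = k' by rewrite size_tuple.
rewrite hsp in hinj hedge hsort hedgeH.
pose w i := val (nth s (s :: p) i).
have hneq : forall i, i < k' -> nth s (s :: p) i != nth s (s :: p) i.+1.
  by move=> l hl'; apply/eqP => /hinj; lia.
have hE : forall l, l < k' -> 0 < glab m (w l) (w l.+1).
  by move=> l hl'; move: (hedge l hl'); rewrite Gr_edge => /andP [].
have hS : forall l, l.+1 < k' -> glab m (w l) (w l.+1) <= glab m (w l.+1) (w l.+2).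
  move=> l hl'; move: (hsort l hl'); rewrite !Gr_lab //; apply: hneq; lia.
have hU : forall l, l.+1 < k' -> w l != w l.+2.
  move=> l hl'; apply/eqP => /val_inj /hinj; lia.
have hwk : w k' = pv m j (Lj m j).
  have e := last_nth s s p; rewrite hsp in e.
  rewrite /w -e hl val_tov //; have := pv_lt hj (leqnn (Lj m j)); lia.
have [hkL hm] := path_forced hj s0 hE hS hU hwk hk'.
subst k'.
have := hedgeH i hi.
have hvi : forall l, l <= Lj m j -> val (insubd s (pv m j l)) = pv m j l.
  by move=> l hl'; rewrite val_tov //; have := pv_lt hj hl'; lia.
case: (pmatch_ends (hm i hi)) => [[e1 e2]|[e1 e2]].
  have -> : nth s (s :: p) i = insubd s (pv m j i) by apply: val_inj; rewrite hvi ?e1 //; lia.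
  have -> : nth s (s :: p) i.+1 = insubd s (pv m j i.+1) by apply: val_inj; rewrite hvi ?e2 //; lia.
  by [].
have -> : nth s (s :: p) i = insubd s (pv m j i.+1) by apply: val_inj; rewrite hvi ?e2 //; lia.
have -> : nth s (s :: p) i.+1 = insubd s (pv m j i) by apply: val_inj; rewrite hvi ?e1 //; lia.
by rewrite set2C'.
Qed.

Lemma count_H n m (s : 'I_n) (H : tgraph n) : val s = 0 -> 5 * m + 1 <= n ->
  tpreserver (Gr n m) H s -> m %/ 2 * m <= #|tedges H|.
Proof.
move=> s0 hn hpres.
pose f (x : 'I_(m %/ 2) * 'I_m) :=
  [set insubd s (pv m x.1 x.2); insubd s (pv m x.1 x.2.+1)].
have hb : forall x : 'I_(m %/ 2) * 'I_m, x.1 < m /\ x.2 < Lj m x.1.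
  by case=> [[a ha] [b hb]] /=; rewrite /Lj; split; lia.
have hlab : forall x, tlab (Gr n m) (f x) = W m * x.1 + x.2 + 1.
  move=> x; have [h1 h2] := hb x.
  have hv : forall l, l <= Lj m x.1 -> val (insubd s (pv m x.1 l)) = pv m x.1 l.
    by move=> l hl'; rewrite val_tov //; have := pv_lt h1 hl'; lia.
  rewrite /f Gr_lab.
    rewrite !hv; try lia.
    by apply: glab_match; rewrite /pmatch h1 h2 !eqxx.
  apply/eqP => e; have := congr1 val e; rewrite !hv; try lia.
  move=> e'; have := @pv_inj m x.1 x.2 x.2.+1 h1 ltac:(lia) ltac:(lia) e'; lia.
have finj : injective f.
  move=> x y e; have := congr1 (tlab (Gr n m)) e; rewrite !hlab => el.
  have [hx1 hx2] := hb x; have [hy1 hy2] := hb y.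
  have wx : x.2 < W m by move: hx2; rewrite /W /Lj; lia.
  have wy : y.2 < W m by move: hy2; rewrite /W /Lj; lia.
  have e1 : x.1 = y.1 :> nat.
    apply/eqP; rewrite eqn_leq; apply/andP; split.
      by apply: (lab_cmp wx wy); lia.
    by apply: (lab_cmp wy wx); lia.
  have e2 : x.2 = y.2 :> nat by move: el; rewrite e1; lia.
  by case: x y e1 e2 {e el hx1 hx2 hy1 hy2 wx wy} => [a b] [c d] /= /val_inj -> /val_inj ->.
have <- : #|[set f x | x in [set: 'I_(m %/ 2) * 'I_m]]| = m %/ 2 * m.
  by rewrite card_imset // cardsT card_prod !card_ord.
apply: subset_leq_card; apply/subsetP => e /imsetP [x _ ->].
have [h1 h2] := hb x.
exact: forced_edge s0 h1 hn hpres h2.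
Qed.

Lemma size_bound n (H G : tgraph n) : tgraph_wf G -> tsubgraph H G -> #|tedges H| <= n ^ 2.
Proof.
move=> hwf [hsub _].
apply: (leq_trans (subset_leq_card hsub)).
have : tedges G \subset [set [set x.1; x.2] | x in [set: 'I_n * 'I_n]].
  apply/subsetP => e he; have [/eqP h2 _] := hwf e he.
  have /cards2P [x [y [_ ->]]] := h2.
  by apply/imsetP; exists (x, y).
move/subset_leq_card => h; apply: (leq_trans h).
apply: (leq_trans (leq_imset_card _ _)).
by rewrite cardsT card_prod card_ord; lia.
Qed.

Theorem corollary14 :
  exists a b N : nat, 0 < a /\ 0 < b /\
    forall n : nat, 0 < n -> N <= n ->
      exists (G : tgraph n) (s : 'I_n),
        tgraph_wf G /\
        forall H : tgraph n, tpreserver G H s ->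
          n ^ 2 <= a * tgsize H /\ tgsize H <= b * n ^ 2.
Proof.
exists 100, 1, 100; split => //; split => // n n0 nN.
pose m := (n - 1) %/ 5.
have hn : 5 * m + 1 <= n by rewrite /m; lia.
have hn2 : n <= 5 * m + 5 by rewrite /m; lia.
exists (Gr n m), (Ordinal n0); split; first exact: Gr_wf.
move=> H hp; split; last first.
  by rewrite mul1n /tgsize; apply: (size_bound (@Gr_wf n m)); case: hp.
have hc := count_H (erefl : val (Ordinal n0) = 0) hn hp.
rewrite /tgsize; apply: (leq_trans _ (leq_mul (leqnn 100) hc)).
have hm : 19 <= m by rewrite /m; lia.
have hq : m <= 2 * (m %/ 2) + 1 by lia.
move: (m %/ 2) hq => q hq.
nia.
Qed.
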